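(* Let $n,d,J$ be positive integers with $n\geqslant d\geqslant2$, and let $\delta,\vartheta>0$. For every $j\in[J]$ let $\boldsymbol{X}_j=\langle X^j_s:s\in\binom{[n]}{d}\rangle$ be a boolean, spreadable, $d$-dimensional random array on $[n]$ which is $(\vartheta,\{1\})$-box independent and satisfies $|\mathbb{E}[X^j_s]-\delta|\leqslant\vartheta$ for all $s\in\binom{[n]}{d}$. If $\boldsymbol{X}$ is any mixture of $\boldsymbol{X}_1,\dots,\boldsymbol{X}_J$, then $\boldsymbol{X}$ is $(2^{d+2}\vartheta,\{1\})$-box independent.
   Context: $[n]=\{1,\dots,n\}$, $\binom{I}{d}$ is the set of $d$-element subsets of $I$. A random array is spreadable if for all $J,K\subseteq[n]$ with $|J|=|K|\geqslant d$, the subarrays $\langle X_s:s\in\binom{J}{d}\rangle$ and $\langle X_s:s\in\binom{K}{d}\rangle$ have the same law (identified via the increasing bijection $J\to K$). A mixture of $\boldsymbol{X}_1,\dots,\boldsymbol{X}_J$ is a boolean $d$-dimensional random array $\boldsymbol{X}=\langle X_s:s\in\binom{[n]}{d}\rangle$ such that for some convex coefficients $\lambda_1,\dots,\lambda_J$, $\mathbb{E}[\prod_{s\in\mathcal{F}}X_s]=\sum_{j=1}^J\lambda_j\mathbb{E}[\prod_{s\in\mathcal{F}}X^j_s]$ for every nonempty $\mathcal{F}\subseteq\binom{[n]}{d}$. A $d$-dimensional box of $[n]$ is $\{s\in\binom{[n]}{d}:|s\cap H_i|=1\ \forall i\in[d]\}$ for 2-element sets $H_1,\dots,H_d\subseteq[n]$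 with $\max(H_i)<\min(H_{i+1})$. A boolean array $\boldsymbol{X}$ is $(\vartheta,\{1\})$-box independent if for every $d$-dimensional box $B$ of $[n]$, $\mathbb{P}(\bigcap_{s\in B}[X_s=1])\leqslant\prod_{s\in B}\mathbb{P}([X_s=1])+\vartheta$ (vacuous if there is no such box). *)

(* Defs.v *)
From HB Require Import structures.
From mathcomp Require Import all_boot all_order all_algebra.
From mathcomp Require Import reals.
Set Implicit Arguments. Unset Strict Implicit. Unset Printing Implicit Defensive.
Import Order.TTheory GRing.Theory Num.Theory.
Local Open Scope ring_scope.

(* [n] is represented by 'I_n = {0,...,n-1} (with its natural order). *)
Notation dsub n d := {s : {set 'I_n} | #|s| == d}.

Notation cfg n d := {ffun dsub n d -> bool}.

Section Arrays.
Variable R : realType.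
Variables n d : nat.

(* The law of a boolean d-dimensional random array on [n]: a probability
   distribution on the finite set of configurations. *)
Definition is_law (mu : {ffun cfg n d -> R}) : Prop :=
  (forall x, 0 <= mu x) /\ \sum_(x : cfg n d) mu x = 1.

Definition moment (mu : {ffun cfg n d -> R}) (F : {set dsub n d}) : R :=
  \sum_(x : cfg n d) mu x * \prod_(s in F) ((x s)%:R : R).

Definition mean (mu : {ffun cfg n d -> R}) (s : dsub n d) : R :=
  \sum_(x : cfg n d) mu x * ((x s)%:R : R).

Definition prob1 (mu : {ffun cfg n d -> R}) (s : dsub n d) : R :=
  \sum_(x : cfg n d | x s) mu x.

Definition prob_all1 (mu : {ffun cfg n d -> R}) (B : {set dsub n d}) : R :=
  \sum_(x : cfg n d | [forall s in B, x s]) mu x.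

(* value of configuration x at the set (f @: t); f is meant injective so that
   f @: t is again a d-set (otherwise the default value false is returned) *)
Definition read_at k (f : 'I_k -> 'I_n) (x : cfg n d) (t : dsub k d) : bool :=
  match insub (f @: val t) : option (dsub n d) with
  | Some s => x s
  | None => false
  end.

(* the subarray <X_{f(t)} : t in binom([k],d)>, i.e. the subarray on J = f([k])
   identified with an array on [k] via the increasing bijection f *)
Definition subarray k (f : 'I_k -> 'I_n) (x : cfg n d) : {ffun dsub k d -> bool} :=
  [ffun t => read_at f x t].

Definition strictly_increasing k (f : 'I_k -> 'I_n) : Prop :=
  forall i j : 'I_k, (i < j)%N -> (f i < f j)%N.

Definition spreadable (mu : {ffun cfg n d -> R}) : Prop :=
  forall k (f g : 'I_k -> 'I_n), (d <= k)%N ->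
    strictly_increasing f -> strictly_increasing g ->
    forall y : {ffun dsub k d -> bool},
      \sum_(x : cfg n d | subarray f x == y) mu x = \sum_(x : cfg n d | subarray g x == y) mu x.

Definition box_sides (H : 'I_d -> {set 'I_n}) : Prop :=
  (forall i, #|H i| = 2%N) /\
  (forall i j : 'I_d, (i < j)%N -> forall a b, a \in H i -> b \in H j -> (a < b)%N).

Definition box (H : 'I_d -> {set 'I_n}) : {set dsub n d} :=
  [set s : dsub n d | [forall i, #|val s :&: H i| == 1%N]].

Definition box_indep (theta : R) (mu : {ffun cfg n d -> R}) : Prop :=
  forall H : 'I_d -> {set 'I_n}, box_sides H ->
    prob_all1 mu (box H) <= \prod_(s in box H) prob1 mu s + theta.

Definition mixture J (mu : {ffun cfg n d -> R}) (mus : 'I_J -> {ffun cfg n d -> R}) : Prop :=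
  exists lam : 'I_J -> R,
    [/\ forall j, 0 <= lam j, \sum_j lam j = 1 &
      forall F : {set dsub n d}, F != set0 ->
        moment mu F = \sum_j lam j * moment (mus j) F].

End Arrays.

(* Main.v *)
Require Import Defs.
From HB Require Import structures.
From mathcomp Require Import all_boot all_order all_algebra.
From mathcomp Require Import reals.
From mathcomp Require Import zify lra.
Import Order.TTheory GRing.Theory Num.Theory.
Local Open Scope ring_scope.

Lemma box_cover (n d : nat) (H : 'I_d -> {set 'I_n}) (s : dsub n d) :
  box_sides H -> s \in box H -> forall x, x \in val s -> exists i, x \in H i.
Proof.
move=> [H2 Hord]; rewrite inE => /forallP Hs x xs.
pose g i := odflt x [pick y in val s :&: H i].
have gP i : g i \in val s :&: H i.
  rewrite /g; case: pickP => [y -> //|/= none].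
  by have := Hs i; rewrite (eq_card0 none).
have ginj : injective g.
  move=> i j gij; apply/eqP; apply/negPn/negP => nij.
  have := gP i; have := gP j; rewrite !inE => /andP[_ hj] /andP[_ hi].
  case: (ltngtP i j) => [lt|lt|/val_inj e]; last by rewrite e eqxx in nij.
  - by have := Hord _ _ lt _ _ hi hj; rewrite gij ltnn.
  - by have := Hord _ _ lt _ _ hj hi; rewrite gij ltnn.
have sub : [set g i | i in 'I_d] \subset val s.
  by apply/subsetP => y /imsetP [i _ ->]; have := gP i; rewrite inE => /andP[].
have : [set g i | i in 'I_d] == val s.
  rewrite eqEcard sub /= (card_imset _ ginj) card_ord.
  by have := valP s => /eqP ->.
move/eqP => E; move: xs; rewrite -E => /imsetP [i _ ->].
by exists i; have := gP i; rewrite inE => /andP[].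
Qed.

Lemma box_card (n d : nat) (H : 'I_d -> {set 'I_n}) :
  box_sides H -> (#|box H| <= 2 ^ d)%N.
Proof.
move=> bs; have [H2 Hord] := bs.
pose f (s : dsub n d) : {ffun 'I_d -> bool} := [ffun i : 'I_d =>
   if [pick x in H i] is Some a then a \in val s else false].
have -> : (2 ^ d)%N = #|{ffun 'I_d -> bool}| by rewrite card_ffun card_bool card_ord.
have := (@leq_card_in _ _ f (box H)); apply => s t sB tB fst.
have L1 : forall i, val s :&: H i = val t :&: H i.
  move=> i; have := congr1 (fun h : {ffun 'I_d -> bool} => h i) fst; rewrite /f !ffunE.
  case: pickP => [a aH|none]; last by have := H2 i; rewrite (eq_card0 none).
  move=> ast.
  move: sB tB; rewrite !inE => /forallP sB /forallP tB.
  have /cards1P [u Eu] := sB i; have /cards1P [v Ev] := tB i.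
  rewrite Eu Ev; case: (eqVneq u v) => [-> //|uv].
  have uH : u \in H i by have := set11 u; rewrite -Eu inE => /andP[].
  have vH : v \in H i by have := set11 v; rewrite -Ev inE => /andP[].
  have us : u \in val s by have := set11 u; rewrite -Eu inE => /andP[].
  have vt : v \in val t by have := set11 v; rewrite -Ev inE => /andP[].
  have EH : [set u; v] == H i.
    rewrite eqEcard cards2 uv H2 andbT; apply/subsetP => y.
    by rewrite !inE => /orP [] /eqP ->.
  move: aH; rewrite -(eqP EH) !inE => /orP [] /eqP ea; subst a.
  - have : u \in val t :&: H i by rewrite inE -ast us uH.
    by rewrite Ev inE => /eqP e; rewrite e eqxx in uv.
  - have : v \in val s :&: H i by rewrite inE ast vt vH.
    rewrite Eu inE => /eqP e; by rewrite e eqxx in uv.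
apply: val_inj; apply/eqP; rewrite eqEcard.
have -> : #|val t| = #|val s| by rewrite (eqP (valP s)) (eqP (valP t)).
rewrite leqnn andbT; apply/subsetP => x xs.
have [i xi] := @box_cover _ _ _ _ bs sB _ xs.
have : x \in val s :&: H i by rewrite inE xs xi.
by rewrite L1 inE => /andP[].
Qed.

Lemma prod_telescope (R : realType) (I : Type) (r : seq I) (a b : I -> R) (e : R) :
  (forall i, 0 <= a i <= 1) -> (forall i, 0 <= b i <= 1) ->
  (forall i, `|a i - b i| <= e) ->
  [/\ 0 <= \prod_(i <- r) a i <= 1, 0 <= \prod_(i <- r) b i <= 1 &
   `|\prod_(i <- r) a i - \prod_(i <- r) b i| <= (size r)%:R * e].
Proof.
move=> ha hb hab; elim: r => [|i r [IHa IHb IH]].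
  by rewrite !big_nil subrr normr0 mul0r ler01 lexx; split.
rewrite !big_cons /=.
have [a0 a1] := andP (ha i); have [b0 b1] := andP (hb i).
have [A0 A1] := andP IHa; have [B0 B1] := andP IHb.
split.
- by rewrite mulr_ge0 //= mulr_ile1.
- by rewrite mulr_ge0 //= mulr_ile1.
have -> : a i * \prod_(j <- r) a j - b i * \prod_(j <- r) b j =
   a i * (\prod_(j <- r) a j - \prod_(j <- r) b j) + (a i - b i) * \prod_(j <- r) b j.
  by rewrite mulrBr mulrBl addrA subrK.
apply: (le_trans (ler_normD _ _)); rewrite !normrM.
rewrite -addn1 natrD mulrDl mul1r; apply: lerD.
  rewrite -[X in _ <= X]mul1r; apply: ler_pM => //.
  by rewrite ger0_norm.
rewrite -[X in _ <= X]mulr1; apply: ler_pM => //.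
by rewrite ger0_norm.
Qed.

Lemma prod_bool (R : realType) (T : finType) (B : {set T}) (x : T -> bool) :
  \prod_(s in B) ((x s)%:R : R) = ([forall s in B, x s])%:R.
Proof.
case E: [forall s in B, x s].
  by rewrite big1 // => i Hi; move/forallP: E => /(_ i); rewrite Hi /= => ->.
move/negbT: E; rewrite negb_forall => /existsP [i]; rewrite negb_imply => /andP [Hi Hx].
by rewrite (bigD1 i) //= (negbTE Hx) mul0r.
Qed.

Section S.
Variables (R : realType) (n d : nat).
Implicit Types (m : {ffun cfg n d -> R}).

Lemma all1_moment m B : prob_all1 m B = moment m B.
Proof.
rewrite /prob_all1 /moment big_mkcond /=; apply: eq_bigr => x _.
by rewrite prod_bool; case: ifP => _; rewrite ?mulr1 ?mulr0.
Qed.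

Lemma prob1_moment m s : prob1 m s = moment m [set s].
Proof.
rewrite /prob1 /moment big_mkcond /=; apply: eq_bigr => x _.
by rewrite big_set1; case: ifP => _; rewrite ?mulr1 ?mulr0.
Qed.

Lemma mean_prob1 m s : mean m s = prob1 m s.
Proof.
rewrite /prob1 /mean [in RHS]big_mkcond /=; apply: eq_bigr => x _.
by case: ifP => _; rewrite ?mulr1 ?mulr0.
Qed.

Lemma prob1_01 m s : is_law m -> 0 <= prob1 m s <= 1.
Proof.
move=> [h0 h1]; rewrite /prob1 sumr_ge0 //= -h1.
rewrite [X in _ <= X](bigID (fun x : cfg n d => x s)) /= lerDl sumr_ge0 //.
Qed.
End S.

Theorem proposition8p4 (R : realType) (n d J : nat) (delta theta : R)
  (mus : 'I_J -> {ffun cfg n d -> R}) (mu : {ffun cfg n d -> R}) :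
  (0 < J)%N -> (2 <= d)%N -> (d <= n)%N -> 0 < delta -> 0 < theta ->
  (forall j, is_law (mus j)) ->
  (forall j, spreadable (mus j)) ->
  (forall j, box_indep theta (mus j)) ->
  (forall j (s : dsub n d), `|mean (mus j) s - delta| <= theta) ->
  is_law mu -> mixture mu mus ->
  box_indep (2 ^+ (d + 2) * theta) mu.
Proof.
move=> J0 d2 dn dl0 th0 laws _ bis means lawmu [lam [l0 l1 mix]] H bs.
have pj01 j s := @prob1_01 R n d (mus j) s (laws j).
have mu01 s := @prob1_01 R n d mu s lawmu.
have pmix s : prob1 mu s = \sum_j lam j * prob1 (mus j) s.
  rewrite !prob1_moment mix; last by apply/set0Pn; exists s; rewrite set11.
  by apply: eq_bigr => j _; rewrite prob1_moment.
have pdev j s : `|prob1 (mus j) s - prob1 mu s| <= 2 * theta.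
  have E : prob1 mu s - delta = \sum_k lam k * (prob1 (mus k) s - delta).
    under eq_bigr do rewrite mulrBr.
    by rewrite sumrB -mulr_suml l1 mul1r pmix.
  have hs : `|\sum_k lam k * (prob1 (mus k) s - delta)| <= theta.
    apply: (le_trans (ler_norm_sum _ _ _)).
    apply: (@le_trans _ _ (\sum_k lam k * theta)); last by rewrite -mulr_suml l1 mul1r.
    apply: ler_sum => k _; rewrite normrM ger0_norm //; apply: ler_wpM2l => //.
    by have := means k s; rewrite mean_prob1.
  have hj := means j s; rewrite mean_prob1 in hj.
  rewrite -E in hs.
  have -> : prob1 (mus j) s - prob1 mu s = (prob1 (mus j) s - delta) - (prob1 mu s - delta) by rewrite opprB addrA subrK.
  apply: (le_trans (ler_normB _ _)); lra.
have cardB := @box_card _ _ _ bs.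
case B0 : (box H == set0).
  have -> : prob_all1 mu (box H) = 1.
    rewrite /prob_all1 -(proj2 lawmu); apply: eq_bigl => x.
    by apply/forallP => s; rewrite (eqP B0) inE.
  by rewrite (eqP B0) big_set0 lerDl mulr_ge0 ?exprn_ge0 // ltW.
set N := #|box H|.
have step j : prob_all1 (mus j) (box H) <= \prod_(s in box H) prob1 mu s + ((2 * N + 1)%N)%:R * theta.
  apply: (le_trans (bis j H bs)).
  have [_ _ T] := @prod_telescope R _ (enum (box H)) _ _ _ (pj01 j) mu01 (pdev j).
  rewrite !big_enum -cardE in T.
  have := ler_norm (\prod_(s in box H) prob1 (mus j) s - \prod_(s in box H) prob1 mu s).
  rewrite natrD natrM /= -/N.
  move: T; set a := \prod_(s in _) _; set b := \prod_(s in _) _; move=> T T2.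
  have : (N%:R : R) * (2 * theta) = 2 * N%:R * theta by rewrite mulrA (mulrC N%:R).
  lra.
rewrite all1_moment mix ?B0 //.
apply: (@le_trans _ _ (\sum_j lam j * (\prod_(s in box H) prob1 mu s + ((2 * N + 1)%N)%:R * theta))).
  apply: ler_sum => j _; apply: ler_wpM2l => //; rewrite -all1_moment; exact: step.
rewrite -mulr_suml l1 mul1r lerD2l ler_pM2r // -natrX ler_nat.
rewrite expnD; have : (N <= 2 ^ d)%N := cardB; lia.
Qed.
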